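(* In the construction described in the context, $\sum_{i=1}^{t-1}c(C_i)\le 2B\log t\le 2B\log n$.
   Context: $\log$ denotes $\log_2$; $c(F)=\sum_{f\in F}c(f)$. Setting: $G=(V,E)$ is a connected finite undirected graph (parallel edges allowed), $w:E\to\mathbb{R}_{\ge0}$ edge weights, $c:E\to\mathbb{R}_{>0}$ edge costs, $n=|V|$. For $S\subseteq V$, $C_G(S)=\{e\in E:|e\cap S|=1\}$ (complete cut; its edges cross it) and $C_G(S,W)=\{e\in C_G(S):w(e)<W\}$ (partial cut). $F\subseteq E$ is a set with $G'=G\setminus F=(V,E\setminus F)$ connected; $B=c(F)$ and $\Delta=\mathrm{MST}(G')-\mathrm{MST}(G)$ (MST weights w.r.t. $w$). Construction: let $T$ be a minimum spanning tree of $G$ and $T\cap F=\{e_1,\dots,e_{t-1}\}$, with $t\ge2$. Removing these edges splits $T$ into components with vertex sets $A_1,\dots,A_t$ (a partition of $V$). Let $G'_{cc}$ be the multigraph with vertex set $V_{cc}=\{A_1,\dots,A_t\}$ having, for every edge $\{u,v\}\in E\setminus F$ with $u\in A_i$, $v\in A_j$, an edge between $A_i$ and $A_j$ of weight $w(\{u,v\})$ (identified with the original edge). Let $T'_{cc}$ be a minimum spanning tree of $G'_{cc}$, with edges $e'_1,\dots,e'_{t-1}$ indexed so that $w(e'_1)\le\dots\le w(e'_{t-1})$ (ties broken arbitrarily). For each $i$, deleting $e'_i,e'_{i+1},\dots,e'_{t-1}$ from $T'_{cc}$ leaves a forest in which $e'_i$ joins two components $L_i,R_i\subseteq V_{cc}$.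 Counters $k(A)=0$ for all $A\in V_{cc}$ initially, and $k(S)=\max_{A\in S}k(A)$. For $i=1,\dots,t-1$ in order: set $X_i=L_i$ if $k(L_i)\le k(R_i)$, else $X_i=R_i$; then increase $k(A)$ by $1$ for every $A\in X_i$. Identifying a set of vertices of $G'_{cc}$ with the union of the corresponding vertex sets in $V$, define $C_i=C_G(X_i,w(e'_i))$. *)

(* Defs.v *)
From HB Require Import structures.
From mathcomp Require Import all_boot all_order all_algebra.
From mathcomp Require Import reals.
From mathcomp Require exp.
Set Implicit Arguments. Unset Strict Implicit. Unset Printing Implicit Defensive.
Import Order.TTheory GRing.Theory Num.Theory.
Local Open Scope ring_scope.

(* Multigraphs are given by a finite vertex type W (with a vertex set Vs),
   a finite type E of edge identifiers (parallel edges allowed), and an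
   endpoint map ends : E -> W * W (the edge {u,v} with ends e = (u,v)). *)

Section Graphs.
Variables (W E : finType) (ends : E -> W * W).

Definition adj (S : {set E}) : rel W :=
  fun u v => [exists e in S, (ends e == (u, v)) || (ends e == (v, u))].

Definition comp (S : {set E}) (x : W) : {set W} := [set y | connect (adj S) x y].

Definition connected_on (Vs : {set W}) (S : {set E}) : Prop :=
  forall u v, u \in Vs -> v \in Vs -> connect (adj S) u v.

Definition spanning_tree (Vs : {set W}) (Es S : {set E}) : Prop :=
  [/\ S \subset Es, connected_on Vs S &
      forall e, e \in S -> ~ connected_on Vs (S :\ e)].

Definition is_mst {R : realType} (w : E -> R) (Vs : {set W}) (Es S : {set E}) : Prop :=
  spanning_tree Vs Es S /\
  forall S', spanning_tree Vs Es S' -> \sum_(e in S) w e <= \sum_(e in S') w e.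

End Graphs.

Definition log2 {R : realType} (x : R) : R := exp.ln x / exp.ln 2.

Definition cost {R : realType} {E : finType} (c : E -> R) (F : {set E}) : R :=
  \sum_(e in F) c e.

Definition pcut {R : realType} {V E : finType} (ends : E -> V * V) (w : E -> R)
  (S : {set V}) (W' : R) : {set E} :=
  [set e | (#|[set (ends e).1; (ends e).2] :&: S| == 1)%N && (w e < W')].

Section Construction.
Variables (V E : finType) (ends : E -> V * V) (T F : {set E}).

Definition cc_of (x : V) : {set V} := comp ends (T :\: F) x.

Definition Vcc : {set {set V}} := [set cc_of x | x : V].

Definition ends_cc (e : E) : {set V} * {set V} :=
  (cc_of (ends e).1, cc_of (ends e).2).

Definition Lside (pre : seq E) (e : E) : {set {set V}} :=
  comp ends_cc [set f in pre] (ends_cc e).1.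
Definition Rside (pre : seq E) (e : E) : {set {set V}} :=
  comp ends_cc [set f in pre] (ends_cc e).2.

Definition kmax (k : {set V} -> nat) (S : {set {set V}}) : nat :=
  (\max_(A in S) k A)%N.

(* Run of the procedure: given current counters k, the already processed
   edges pre = e'_1..e'_{i-1}, and the remaining edges rest = e'_i..e'_{t-1},
   returns the list of pairs (X_j, e'_j) for j = i..t-1. *)
Fixpoint run (k : {set V} -> nat) (pre rest : seq E)
  : seq ({set {set V}} * E) :=
  match rest with
  | [::] => [::]
  | e :: rest' =>
      let L := Lside pre e in
      let Rs := Rside pre e in
      let X := if (kmax k L <= kmax k Rs)%N then L else Rs in
      (X, e) :: run (fun A => (k A + (A \in X))%N) (rcons pre e) rest'
  end.

End Construction.

(* identify a set of vertices of G'_cc with the union of the corresponding sets *)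
Definition flat {V : finType} (X : {set {set V}}) : {set V} := \bigcup_(A in X) A.

(* Main.v *)
Require Import Defs.
From HB Require Import structures.
From mathcomp Require Import all_boot all_order all_algebra.
From mathcomp Require Import reals.
From mathcomp Require exp.
From Stdlib Require Import Classical_Prop.
Set Implicit Arguments. Unset Strict Implicit. Unset Printing Implicit Defensive.
Import Order.TTheory GRing.Theory Num.Theory.
Section G.
Variables (W E : finType) (ends : E -> W * W).
Local Notation adj := (Defs.adj ends).
Local Notation comp := (Defs.comp ends).

Lemma adjP (S : {set E}) u v : reflect (exists2 e, e \in S & ends e = (u, v) \/ ends e = (v, u)) (adj S u v).
Proof.
apply: (iffP existsP) => [[e /andP[eS /orP[/eqP H|/eqP H]]]|[e eS [H|H]]]; exists e => //; auto;
  by rewrite eS H eqxx ?orbT.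
Qed.

Lemma adj_sym (S : {set E}) : symmetric (adj S).
Proof. by move=> u v; apply/adjP/adjP => -[e eS H]; exists e => //; tauto. Qed.

Lemma csym (S : {set E}) : connect_sym (adj S).
Proof. exact/sym_connect_sym/adj_sym. Qed.

Lemma adj_mono (S1 S2 : {set E}) : S1 \subset S2 -> forall u v, adj S1 u v -> adj S2 u v.
Proof. by move=> sub u v /adjP[e eS H]; apply/adjP; exists e => //; apply: (subsetP sub). Qed.

Lemma connect_mono (S1 S2 : {set E}) : S1 \subset S2 -> forall u v, connect (adj S1) u v -> connect (adj S2) u v.
Proof.
move=> sub u v; apply: connect_sub => x y H; apply: connect1; exact: adj_mono H.
Qed.

Lemma adj_ends (S : {set E}) e : e \in S -> adj S (ends e).1 (ends e).2.
Proof. by move=> eS; apply/adjP; exists e => //; left; case: (ends e). Qed.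

Lemma connect_del (S : {set E}) g x y : connect (adj S) x y ->
  connect (adj (S :\ g)) x y \/
  (connect (adj (S :\ g)) x (ends g).1 /\ connect (adj (S :\ g)) y (ends g).2) \/
  (connect (adj (S :\ g)) x (ends g).2 /\ connect (adj (S :\ g)) y (ends g).1).
Proof.
have Hs := csym (S :\ g).
move/connectP => [p pth ->]; elim: p x pth => [|z p IH] x /=; first by left; exact: connect0.
move=> /andP[xz pth]; have := IH z pth; set yy := last z p.
move: xz => /adjP[e eS He].
case: (eqVneq e g) => [?|neg].
- subst e; case: He => He; rewrite He /=.
  + move=> [H|[[H1 H2]|[H1 H2]]].
    * by right; left; split; [exact: connect0| rewrite Hs].
    * by right; left; split; [exact: connect0|].
    * by left; rewrite Hs.
  + move=> [H|[[H1 H2]|[H1 H2]]].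
    * by right; right; split; [exact: connect0| rewrite Hs].
    * by left; rewrite Hs.
    * by right; right; split; [exact: connect0|].
- have exz : connect (adj (S :\ g)) x z.
    apply: connect1; apply/adjP; exists e; first by rewrite !inE neg.
    exact: He.
  move=> [H|[[H1 H2]|[H1 H2]]].
  + by left; exact: connect_trans exz H.
  + by right; left; split => //; exact: connect_trans exz H1.
  + by right; right; split => //; exact: connect_trans exz H1.
Qed.

End G.
Section G2.
Variables (W E : finType) (ends : E -> W * W).
Local Notation adj := (Defs.adj ends).

Lemma connected_lift (Vs : {set W}) (S S' : {set E}) :
  (forall x y, adj S x y -> connect (adj S') x y) ->
  connected_on ends Vs S -> connected_on ends Vs S'.
Proof. by move=> H Hc u v uV vV; apply: (connect_sub H); apply: Hc. Qed.

Lemma lift_del (S S' : {set E}) g :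
  S :\ g \subset S' -> connect (adj S') (ends g).1 (ends g).2 ->
  forall x y, adj S x y -> connect (adj S') x y.
Proof.
move=> sub cg x y /adjP[e eS He].
case: (eqVneq e g) => [?|neg].
- subst e; case: He => He; rewrite He /= in cg => //.
  by rewrite (csym ends S'). 
- apply: connect1; apply/adjP; exists e => //; apply: (subsetP sub); by rewrite !inE neg.
Qed.

Lemma cycle_false (Vs : {set W}) (Es S : {set E}) g :
  spanning_tree ends Vs Es S -> g \in S ->
  connect (adj (S :\ g)) (ends g).1 (ends g).2 -> False.
Proof.
move=> [_ Hc Hm] gS cg; apply: (Hm g gS); apply: (connected_lift _ Hc).
exact: lift_del.
Qed.

Lemma min_connected (Vs : {set W}) (S : {set E}) :
  connected_on ends Vs S -> exists S3 : {set E},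
  [/\ S3 \subset S, connected_on ends Vs S3 &
      forall e, e \in S3 -> ~ connected_on ends Vs (S3 :\ e)].
Proof.
move: {2}#|S| (leqnn #|S|) => n; elim: n S => [|n IH] S.
- rewrite leqn0 => /eqP/cards0_eq -> Hc; exists set0; split => //.
  by move=> e; rewrite inE.
- move=> Hn Hc.
  case: (classic (exists2 e, e \in S & connected_on ends Vs (S :\ e))).
  + move=> [e eS Hc']; have [|S3 [s1 s2 s3]] := IH (S :\ e) _ Hc'.
      by rewrite -ltnS (leq_trans _ Hn) // (cardsD1 e S) eS.
    exists S3; split => //; apply: (subset_trans s1); exact: subD1set.
  + move=> Hno; exists S; split => // e eS Hc'; apply: Hno; by exists e.
Qed.

Lemma flip (S P : {set E}) a b : forall n (U : {set E}), #|S :\: U| <= n ->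
  P \subset U -> U \subset S -> ~~ connect (adj U) a b -> connect (adj S) a b ->
  exists (U' : {set E}) g, [/\ (P \subset U') && (U' \subset S), g \in S, g \notin U', ~~ connect (adj U') a b &
                  connect (adj (g |: U')) a b].
Proof.
elim=> [|n IH] U.
- rewrite leqn0 => /eqP/cards0_eq/eqP; rewrite setD_eq0 => SU PU US nc c.
  have E' : S = U by apply/eqP; rewrite eqEsubset SU US.
    by rewrite -E' c in nc.
- move=> Hn PU US nc c.
  case: (boolP (S :\: U == set0)) => [|/set0Pn [g]].
  + rewrite setD_eq0 => SU.
    have E' : S = U by apply/eqP; rewrite eqEsubset SU US.
    by rewrite -E' c in nc.
  + rewrite inE => /andP[gU gS].
    case cg: (connect (adj (g |: U)) a b).
    * by exists U, g; rewrite PU US.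
    * apply: (IH (g |: U)) => //.
      - rewrite -ltnS (leq_trans _ Hn) //; apply: proper_card.
        rewrite properEneq; apply/andP; split.
          apply/eqP => Heq; have : g \in S :\: U by rewrite inE gU gS.
          by rewrite -Heq !inE eqxx.
        by apply: setDS; apply: subsetUr.
      - exact: (subset_trans PU (subsetUr _ _)).
      - by rewrite subUset sub1set gS.
      - by rewrite cg.
Qed.

End G2.
Section G3.
Variables (R : realType) (W E : finType) (ends : E -> W * W) (w : E -> R).
Local Notation adj := (Defs.adj ends).
Local Open Scope ring_scope.

Lemma sum_sub_le (A B : {set E}) : (forall e, 0 <= w e) -> A \subset B ->
  \sum_(e in A) w e <= \sum_(e in B) w e.
Proof.
move=> w0 AB; rewrite [X in _ <= X](big_setID A) /= (setIidPr AB) lerDl.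
by apply: sumr_ge0 => e _.
Qed.

Lemma sum_U1_le (A : {set E}) f : (forall e, 0 <= w e) ->
  \sum_(e in f |: A) w e <= w f + \sum_(e in A) w e.
Proof.
move=> w0; case: (boolP (f \in A)) => fA.
- by rewrite (setUidPr _) ?sub1set // lerDr.
- by rewrite big_setU1.
Qed.

Lemma mst_path (Vs : {set W}) (Es S P : {set E}) f :
  is_mst ends w Vs Es S -> (forall e, 0 <= w e) -> P \subset S -> f \in Es ->
  (ends f).1 \in Vs -> (ends f).2 \in Vs ->
  (forall g, g \in S -> g \notin P -> w f < w g) ->
  connect (adj P) (ends f).1 (ends f).2.
Proof.
move=> [Hst Hmin] w0 PS fE aV bV Hw.
set a := (ends f).1; set b := (ends f).2.
apply/idPn => nc.
have Hs := Hst; case: Hs => [SE Sc Sm].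
have cab : connect (adj S) a b by apply: Sc.
have [U [g [/andP[PU US] gS gU ncU cUg]]] := flip (leqnn _) (subxx P) PS nc cab.
have wfg : w f < w g by apply: Hw => //; apply: contra gU; apply: (subsetP PU).
have HsS := csym ends (S :\ g).
have ncA : ~~ connect (adj (S :\ g)) a b.
  apply/negP => cA.
  have USg : U \subset S :\ g.
    apply/subsetP => x xU; rewrite !inE (subsetP US) // andbT.
    by apply: contraNneq gU => <-.
  have := connect_del g cUg; rewrite setU1K // => -[|[[H1 H2]|[H1 H2]]].
  + by rewrite (negbTE ncU).
  + apply: (cycle_false Hst gS).
    have {}H1 := connect_mono USg H1; have {}H2 := connect_mono USg H2.
    rewrite HsS in H1; apply: connect_trans H1 _; apply: connect_trans cA _; exact: H2.
  + apply: (cycle_false Hst gS).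
    have {}H1 := connect_mono USg H1; have {}H2 := connect_mono USg H2.
    rewrite HsS in H2; apply: connect_trans H2 _; rewrite HsS in cA.
    apply: connect_trans cA _; exact: H1.
set S2 := f |: (S :\ g).
have sub2 : S :\ g \subset S2 by apply: subsetUr.
have cS2 : connected_on ends Vs S2.
  apply: (connected_lift _ Sc); apply: (lift_del sub2).
  have af : connect (adj S2) a b.
    by apply: connect1; apply: adj_ends; rewrite !inE eqxx.
  have := connect_del g cab => -[|[[H1 H2]|[H1 H2]]].
  + by rewrite (negbTE ncA).
  + have {}H1 := connect_mono sub2 H1; have {}H2 := connect_mono sub2 H2.
    rewrite (csym ends S2) in H1; apply: connect_trans H1 _.
    exact: connect_trans af H2.
  + have {}H1 := connect_mono sub2 H1; have {}H2 := connect_mono sub2 H2.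
    rewrite (csym ends S2) in H2; rewrite (csym ends S2) in af.
    exact: connect_trans H2 (connect_trans af H1).
have [S3 [s31 s32 s33]] := min_connected cS2.
have st3 : spanning_tree ends Vs Es S3.
  split => //; apply: (subset_trans s31); rewrite subUset sub1set fE.
  exact: (subset_trans (subD1set _ _) SE).
have := Hmin S3 st3.
rewrite (big_setD1 g gS) /= => H.
have H3 := sum_sub_le w0 s31.
have H4 := sum_U1_le (S :\ g) f w0.
have : w g + \sum_(i in S :\ g) w i <= w f + \sum_(e in S :\ g) w e.
  exact: le_trans H (le_trans H3 H4).
by rewrite lerD2r leNgt wfg.
Qed.

End G3.
Section G4.
Variables (W E : finType) (ends : E -> W * W).
Local Notation adj := (Defs.adj ends).
Local Notation comp := (Defs.comp ends).

Definition comps (S : {set E}) : {set {set W}} := [set comp S x | x : W].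

Lemma comp_eq (S : {set E}) x y : connect (adj S) x y -> comp S x = comp S y.
Proof.
move=> cxy; apply/setP => z; rewrite !inE; apply/idP/idP => H.
- by apply: connect_trans H; rewrite (csym ends S).
- exact: connect_trans cxy H.
Qed.

Lemma ncomp_del (S : {set E}) g : g \in S ->
  #|comps (S :\ g)| <= #|comps S| + 1 /\
  (~~ connect (adj (S :\ g)) (ends g).1 (ends g).2 -> #|comps (S :\ g)| = #|comps S| + 1).
Proof.
move=> gS.
set S' := S :\ g; set A := comps S'.
pose h (C : {set W}) := [set y | [exists x in C, connect (adj S) x y]].
have subS : S' \subset S by apply: subD1set.
have hc x : h (comp S' x) = comp S x.
  apply/setP => y; rewrite !inE; apply/existsP/idP => [[x' /andP[]]|cxy].
    rewrite inE => /(connect_mono subS) c1 c2; exact: connect_trans c1 c2.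
  by exists x; rewrite inE connect0.
have hA : h @: A = comps S.
  by rewrite /A /comps -imset_comp; apply: eq_imset => x /=; rewrite hc.
set C2 := comp S' (ends g).2; set C1 := comp S' (ends g).1.
have inj : {in A :\ C2 &, injective h}.
  move=> C C'; rewrite !inE => /andP[nC /imsetP[x _ eC]] /andP[nC' /imsetP[y _ eC']].
  subst C C'; rewrite !hc => Hxy.
  have : y \in comp S x by rewrite Hxy inE connect0.
  rewrite inE => /(connect_del g) [|[[H1 H2]|[H1 H2]]].
  - exact: comp_eq.
  - by move: nC'; rewrite /C2 (comp_eq H2) eqxx.
  - by move: nC; rewrite /C2 (comp_eq H1) eqxx.
have c1 : #|A :\ C2| <= #|comps S|.
  rewrite -(card_in_imset inj) -hA; apply: subset_leq_card; apply: imsetS.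
  exact: subD1set.
split.
- rewrite (cardsD1 C2 A) addnC leq_add //; by case: (C2 \in A).
- move=> nc.
  have C2A : C2 \in A by apply: imset_f.
  have C12 : C1 != C2.
    apply: contraNneq nc => H; have : (ends g).2 \in C1 by rewrite H inE connect0.
    by rewrite inE.
  have hA' : h @: (A :\ C2) = comps S.
    apply/eqP; rewrite eqEsubset -{1}hA imsetS ?subD1set //= -hA.
    apply/subsetP => y /imsetP[C CA ->].
    case: (eqVneq C C2) => [->|neq]; last by apply: imset_f; rewrite !inE neq.
    have -> : h C2 = h C1.
      rewrite /C1 /C2 !hc; apply: esym; apply: comp_eq; apply: connect1.
      exact: adj_ends.
    by apply: imset_f; rewrite !inE C12 imset_f.
  by rewrite (cardsD1 C2 A) C2A -hA' (card_in_imset inj) addnC.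
Qed.

Lemma ncomp_tree (T : {set E}) (x0 : W) :
  connected_on ends [set: W] T ->
  (forall g, g \in T -> ~~ connect (adj (T :\ g)) (ends g).1 (ends g).2) ->
  forall D, #|comps (T :\: D)| = #|T :&: D| + 1.
Proof.
move=> Tc Tb D; move: {2}#|T :&: D| (erefl #|T :&: D|) => n.
elim: n D => [|n IH] D.
- move/eqP; rewrite cards_eq0 => /eqP TD.
  have -> : T :\: D = T.
    apply/setP => x; rewrite !inE; case xT: (x \in T); rewrite ?andbF ?andbT //.
    apply/negP => xD; have : x \in T :&: D by rewrite inE xT xD.
    by rewrite TD inE.
  have -> : comps T = [set comp T x0].
    apply/setP => C; rewrite !inE; apply/imsetP/eqP => [[x _ ->]|->].
      by apply: esym; apply: comp_eq; apply: Tc.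
    by exists x0.
  by rewrite cards1 TD cards0.
- move=> Hn.
  have : T :&: D != set0 by rewrite -card_gt0 Hn.
  case/set0Pn => g; rewrite inE => /andP[gT gD].
  have E1 : T :\: D = (T :\: (D :\ g)) :\ g.
    apply/setP => x; rewrite !inE; case: (eqVneq x g) => [->|]; first by rewrite gD.
    by [].
  have gT' : g \in T :\: (D :\ g) by rewrite !inE eqxx gT.
  have [_ Heq] := ncomp_del gT'.
  have Hc : #|T :&: (D :\ g)| = n.
    move: Hn; rewrite (cardsD1 g (T :&: D)) inE gT gD add1n => /eqP; rewrite eqSS => /eqP <-.
    by apply: eq_card => x; rewrite !inE; case: (x \in T); case: (x != g).
  rewrite E1 Heq ?(IH _ Hc) ?Hn ?Hc ?addn1 //.
  apply: contra (Tb g gT); apply: connect_mono; apply/subsetP => x; rewrite !inE.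
  by case/andP => -> /andP[_ ->].
Qed.

End G4.
Lemma kmax_ge (V : finType) (k : {set V} -> nat) (S : {set {set V}}) A :
  A \in S -> k A <= kmax k S.
Proof. by move=> AS; rewrite /kmax (leq_bigmax_cond A AS). Qed.

Lemma union_bound (V : finType) (k : {set V} -> nat) (X Y : {set {set V}}) a :
  a \in X -> X :&: Y = set0 -> kmax k X <= kmax k Y ->
  2 ^ kmax k X <= #|X| -> 2 ^ kmax k Y <= #|Y| ->
  2 ^ kmax (fun A => k A + (A \in X)) (X :|: Y) <= #|X :|: Y|.
Proof.
move=> aX XY kXY hX hY.
have cU : #|X :|: Y| = #|X| + #|Y| by rewrite cardsU XY cards0 subn0.
have ne : 0 < #|X :|: Y| by apply/card_gt0P; exists a; rewrite inE aX.
rewrite {1}/kmax; have [A AXY ->] := eq_bigmax_cond (fun A => k A + (A \in X)) ne.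
rewrite cU; case AX: (A \in X).
- rewrite addn1 expnS mul2n -addnn; apply: leq_add.
    by apply: leq_trans hX; apply: leq_pexp2l => //; apply: kmax_ge.
  by apply: leq_trans hY; apply: leq_pexp2l => //; apply: (leq_trans (kmax_ge k AX)).
- move: AXY; rewrite inE AX /= addn0 => AY.
  apply: leq_trans (leq_addl _ _); apply: leq_trans hY.
  by apply: leq_pexp2l => //; apply: kmax_ge.
Qed.
Section Cc.
Variables (V E : finType) (ends : E -> V * V) (T F Tp : {set E}).
Local Notation ends' := (ends_cc ends T F).
Local Notation Vcc := (Vcc ends T F).
Local Notation adj' := (Defs.adj ends').
Local Notation comp' := (Defs.comp ends').
Hypothesis Hst : spanning_tree ends' Vcc (~: F) Tp.

Lemma ends_in e : ((ends' e).1 \in Vcc) && ((ends' e).2 \in Vcc).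
Proof. by rewrite /= !imset_f. Qed.

Lemma comp_sub (S : {set E}) A : A \in Vcc -> comp' S A \subset Vcc.
Proof.
move=> AV; apply/subsetP => B; rewrite inE => cAB.
rewrite -(closed_connect _ cAB) //.
move=> x y /adjP[e _ [He|He]]; have := ends_in e; rewrite He /= => /andP[-> ->] //.
Qed.

Lemma flat_mem (X : {set {set V}}) x : X \subset Vcc -> x \in flat X -> cc_of ends T F x \in X.
Proof.
move=> XV /bigcupP[A AX xA].
have /imsetP[y _ Ay] := subsetP XV A AX.
move: xA; rewrite Ay inE => cyx.
have e : cc_of ends T F y = cc_of ends T F x by apply: comp_eq cyx.
by rewrite -e -Ay.
Qed.

Definition inv (k : {set V} -> nat) (P : {set E}) :=
  forall A, A \in Vcc -> 2 ^ kmax k (comp' P A) <= #|comp' P A|.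

Lemma comp_add (P : {set E}) e A y : e \notin P ->
  connect (adj' (e |: P)) A y =
  [|| connect (adj' P) A y,
      connect (adj' P) A (ends' e).1 && connect (adj' P) y (ends' e).2 |
      connect (adj' P) A (ends' e).2 && connect (adj' P) y (ends' e).1].
Proof.
move=> eP; have sub : P \subset e |: P by apply: subsetUr.
have ce : connect (adj' (e |: P)) (ends' e).1 (ends' e).2.
  by apply: connect1; apply: adj_ends; rewrite !inE eqxx.
have Hs := csym ends' (e |: P).
apply/idP/idP.
- move/(connect_del e); rewrite setU1K // => -[->//|[[-> ->]|[-> ->]]];
  by rewrite ?orbT.
- case/or3P => [/(connect_mono sub) //|/andP[H1 H2]|/andP[H1 H2]].
  + have {}H1 := connect_mono sub H1; have {}H2 := connect_mono sub H2.
    rewrite Hs in H2; exact: connect_trans H1 (connect_trans ce H2).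
  + have {}H1 := connect_mono sub H1; have {}H2 := connect_mono sub H2.
    rewrite Hs in ce; rewrite Hs in H2.
    exact: connect_trans H1 (connect_trans ce H2).
Qed.

Lemma cs_eq (P : {set E}) x y z : connect (adj' P) x y ->
  connect (adj' P) x z = connect (adj' P) y z.
Proof.
move=> cxy; apply/idP/idP => H.
- by apply: connect_trans H; rewrite (csym ends' P).
- exact: connect_trans cxy H.
Qed.

Lemma run_count rest : forall k pre, uniq (pre ++ rest) -> {subset pre ++ rest <= Tp} ->
  inv k [set f in pre] -> forall A, A \in Vcc ->
  2 ^ (k A + count (fun p : {set {set V}} * E => A \in p.1) (run ends T F k pre rest)) <= #|Vcc|.
Proof.
elim: rest => [|e rest IH] k pre U Sub Hinv A AV /=.
- rewrite addn0; apply: leq_trans (leq_pexp2l _ (kmax_ge k (A:=A) (S:=comp' [set f in pre] A) _)) _ => //.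
    by rewrite inE connect0.
  exact: leq_trans (Hinv A AV) (subset_leq_card (comp_sub _ AV)).
set P := [set f in pre].
set a := (ends' e).1; set b := (ends' e).2.
set L := comp' P a; set R := comp' P b.
have eP : e \notin P.
  by rewrite inE; move: U; rewrite cat_uniq /= => /and4P[_ /norP[] ].
have eT : e \in Tp by apply: Sub; rewrite mem_cat inE eqxx orbT.
have PT : P \subset Tp :\ e.
  apply/subsetP => f; rewrite !inE => fp; rewrite Sub ?mem_cat ?fp // andbT.
  by apply: contraNneq eP => <-; rewrite inE.
have nab : ~~ connect (adj' P) a b.
  apply/negP => cab; apply: (cycle_false Hst eT); move: cab; apply: connect_mono; exact: PT.
have aL : a \in L by rewrite inE connect0.
have bR : b \in R by rewrite inE connect0.
have LR : L :&: R = set0.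
  apply/setP => y; rewrite !inE; apply/negP => /andP[ay by'].
  by move: nab; rewrite (cs_eq _ ay) (csym ends' P) by'.
have P'E : [set f in rcons pre e] = e |: P.
  by apply/setP => f; rewrite !inE mem_rcons inE.
set X := if kmax k L <= kmax k R then L else R.
have XLR : X \subset L :|: R by rewrite /X; case: ifP => _; [apply: subsetUl|apply: subsetUr].
rewrite addnA; apply: IH.
- by rewrite cat_rcons.
- by move=> f; rewrite cat_rcons; apply: Sub.
- move=> B BV; rewrite P'E.
  case: (boolP (connect (adj' P) a B || connect (adj' P) b B)) => HB.
  + have -> : comp' (e |: P) B = L :|: R.
      apply/setP => y; rewrite !inE comp_add //.
      case/orP: HB => HB.
      * rewrite -!(cs_eq _ HB) (csym ends' P y b) connect0 /=.
        by rewrite -/a -/b (negbTE nab) /= orbF.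
      * rewrite -!(cs_eq _ HB) (csym ends' P y a) connect0 /=.
        by rewrite -/a -/b (csym ends' P b a) (negbTE nab) /= orbC.
    rewrite /X; case: ifP => kLR.
    * exact: (union_bound aL LR kLR (Hinv _ (proj1 (andP (ends_in e)))) (Hinv _ (proj2 (andP (ends_in e))))).
    * rewrite setUC; apply: (union_bound bR); first by rewrite setIC.
      - by apply: ltnW; rewrite ltnNge kLR.
      - exact: Hinv _ (proj2 (andP (ends_in e))).
      - exact: Hinv _ (proj1 (andP (ends_in e))).
  + have -> : comp' (e |: P) B = comp' P B.
      apply/setP => y; rewrite !inE comp_add //.
      move: HB; rewrite negb_or (csym ends' P a) (csym ends' P b) => /andP[/negbTE -> /negbTE ->].
      by rewrite /= !orbF.
    have -> : kmax (fun A => k A + (A \in X)) (comp' P B) = kmax k (comp' P B).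
      rewrite /kmax; apply: eq_bigr => A' A'B.
      suff -> : (A' \in X) = false by rewrite addn0.
      apply/negP => /(subsetP XLR); rewrite !inE => /orP[] H; move: HB; rewrite inE in A'B.
      * by rewrite (csym ends' P B) in A'B; rewrite (cs_eq _ H) A'B.
      * by rewrite (csym ends' P B) in A'B; rewrite (cs_eq _ H) A'B orbT.
    exact: Hinv.
- exact: AV.
Qed.

End Cc.
Lemma run_mem (V E : finType) (ends : E -> V * V) (T F : {set E}) rest :
  forall k pre (p : {set {set V}} * E), p \in run ends T F k pre rest ->
  exists pre1 e rest1, [/\ rest = pre1 ++ e :: rest1, p.2 = e &
    (p.1 = Lside ends T F (pre ++ pre1) e \/ p.1 = Rside ends T F (pre ++ pre1) e)].
Proof.
elim: rest => [|e rest IH] k pre p //=.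
rewrite inE => /orP[/eqP ->|].
- exists [::], e, rest; rewrite cats0; split => //.
  by case: ifP => _; [left|right].
- move/IH => [pre1 [e' [rest1 [-> H2 H3]]]].
  exists (e :: pre1), e', rest1; split => //.
  by rewrite -cat_rcons.
Qed.

Section Cross.
Variables (R : realType) (V E : finType) (ends : E -> V * V) (w : E -> R) (T F Tp : {set E}).
Local Notation ends' := (ends_cc ends T F).
Local Notation Vcc := (Vcc ends T F).
Local Notation adj' := (Defs.adj ends').
Local Notation comp' := (Defs.comp ends').
Local Open Scope ring_scope.

Lemma flat_iff (X : {set {set V}}) x : X \subset Vcc ->
  (x \in flat X) = (cc_of ends T F x \in X).
Proof.
move=> XV; apply/idP/idP; first exact: flat_mem.
by move=> H; apply/bigcupP; exists (cc_of ends T F x) => //; rewrite inE connect0.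
Qed.

Lemma pcut_one (X : {set {set V}}) W' f : X \subset Vcc ->
  f \in pcut ends w (flat X) W' ->
  (cc_of ends T F (ends f).1 \in X) || (cc_of ends T F (ends f).2 \in X).
Proof.
move=> XV; rewrite inE => /andP[/eqP H _].
have : [set (ends f).1; (ends f).2] :&: flat X != set0 by rewrite -card_gt0 H.
case/set0Pn => z; rewrite !inE => /andP[/orP[]/eqP -> zX]; rewrite -!flat_iff // zX ?orbT //.
Qed.

Lemma pcut_sub (X : {set {set V}}) W' f : X \subset Vcc ->
  (forall e, (ends e).1 != (ends e).2) ->
  (cc_of ends T F (ends f).1 \in X) = (cc_of ends T F (ends f).2 \in X) ->
  f \notin pcut ends w (flat X) W'.
Proof.
move=> XV nl Heq; rewrite inE negb_and; apply/orP; left.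
rewrite -!flat_iff // in Heq.
set x := (ends f).1; set y := (ends f).2.
case xX: (x \in flat X).
- have -> : [set x; y] :&: flat X = [set x; y].
    apply/setIidPl/subsetP => z; rewrite !inE => /orP[]/eqP ->; by rewrite -?Heq xX.
  by rewrite cards2 nl.
- have -> : [set x; y] :&: flat X = set0.
    apply/setP => z; rewrite !inE; apply/negP => /andP[/orP[]/eqP -> H].
      by rewrite xX in H.
    by rewrite -Heq xX in H.
  by rewrite cards0.
Qed.

Lemma cross_F k s (p : {set {set V}} * E) :
  is_mst ends' w Vcc (~: F) Tp -> (forall e, 0 <= w e) ->
  (forall e, (ends e).1 != (ends e).2) ->
  perm_eq s (enum Tp) -> sorted (fun a b => w a <= w b) s ->
  p \in run ends T F k [::] s ->
  p.1 \subset Vcc /\ (forall f, f \in pcut ends w (flat p.1) (w p.2) -> f \in F).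
Proof.
move=> Hm w0 nl Hp Hs /run_mem [pre1 [e [rest1 [Es Hp2 Hp1]]]].
have [ea eb] := andP (ends_in ends T F e).
have XV : p.1 \subset Vcc by case: Hp1 => ->; apply: comp_sub.
split => // f fc; apply/idPn => fF.
have wfe : w f < w e by move: fc; rewrite inE Hp2 => /andP[_].
have [fa fb] := andP (ends_in ends T F f).
have cf : connect (adj' [set g in pre1]) (ends' f).1 (ends' f).2.
  apply: (mst_path Hm w0) => //.
  - apply/subsetP => g; rewrite inE => gpre.
    by rewrite -mem_enum -(perm_mem Hp) Es mem_cat gpre.
  - by rewrite inE.
  - move=> g gT gP; apply: (lt_le_trans wfe).
    have : g \in e :: rest1.
      move: gT; rewrite -mem_enum -(perm_mem Hp) Es mem_cat.
      by rewrite inE in gP; rewrite (negbTE gP).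
    rewrite inE => /orP[/eqP ->//|gr].
    move: Hs; rewrite Es sorted_cat_cons => /andP[_ Hpath].
    have tr : transitive (fun a b : E => w a <= w b) by move=> ? ? ?; apply: le_trans.
    have := order_path_min tr Hpath.
    by move/allP => /(_ g gr).
move: fc; apply/negP; apply: pcut_sub => //.
case: Hp1 => -> /=; rewrite !inE (csym _ _ _ (ends' f).1) (csym _ _ _ (ends' f).2);
  exact: cs_eq cf.
Qed.

End Cross.
Section Logs.
Variable R : realType.
Local Open Scope ring_scope.

Lemma log2_nat (m N : nat) : (2 ^ m <= N)%N -> (m%:R : R) <= log2 (N%:R : R).
Proof.
move=> H.
have N0 : (0 < N)%N by apply: leq_trans H; rewrite expn_gt0.
rewrite /log2 ler_pdivlMr ?exp.ln_gt0 ?ltr1n // mulr_natl -exp.lnXn //.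
rewrite exp.ler_ln ?posrE ?exprn_gt0 ?ltr0n // -natrX ler_nat //.
Qed.

Lemma log2_mono (a b : nat) : (0 < a)%N -> (a <= b)%N -> log2 (a%:R : R) <= log2 (b%:R : R).
Proof.
move=> a0 ab; rewrite /log2 ler_wpM2r ?invr_ge0 ?exp.ln_ge0 ?ler1n //.
by rewrite exp.ler_ln ?posrE ?ltr0n ?ler_nat // (leq_trans a0 ab).
Qed.

Lemma sum_ind (I : eqType) (r : seq I) (P : pred I) :
  \sum_(p <- r) ((P p)%:R : R) = (count P r)%:R.
Proof.
elim: r => [|x r IH]; first by rewrite big_nil.
by rewrite big_cons IH /= natrD.
Qed.
End Logs.
Unset Implicit Arguments.
Local Open Scope ring_scope.

Theorem mainTheorem10 (R : realType) (V E : finType) (ends : E -> V * V)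
  (w c : E -> R) (F T T' : {set E}) (s : seq E) :
  (* no loops *)
  (forall e, (ends e).1 != (ends e).2) ->
  (* G connected, weights nonnegative, costs positive *)
  connected_on ends [set: V] [set: E] ->
  (forall e, 0 <= w e) ->
  (forall e, 0 < c e) ->
  (* G' = G \ F connected *)
  connected_on ends [set: V] (~: F) ->
  (* T a minimum spanning tree of G with T ∩ F nonempty (t >= 2) *)
  is_mst ends w [set: V] [set: E] T ->
  (2 <= #|T :&: F|.+1)%N ->
  (* T'_cc a minimum spanning tree of G'_cc *)
  is_mst (ends_cc ends T F) w (Vcc ends T F) (~: F) T' ->
  (* s = e'_1, ..., e'_{t-1}: the edges of T'_cc sorted by nondecreasing weight *)
  perm_eq s (enum T') ->
  sorted (fun a b => w a <= w b) s ->
  let B := cost c F in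
  let t := #|T :&: F|.+1 in
  let n := #|V| in
  \sum_(p <- run ends T F (fun _ => 0%N) [::] s) cost c (pcut ends w (flat p.1) (w p.2))
    <= 2 * B * log2 (t%:R) /\
  2 * B * log2 (t%:R) <= 2 * B * log2 (n%:R).
  (* your proof *)
Proof.
move=> nl Gc w0 c0 G'c HT Ht2 HT' Hp Hs B t n.
have [HTst _] := HT.
have [_ Tc _] := HTst.
have Tb : forall g, g \in T -> ~~ connect (Defs.adj ends (T :\ g)) (ends g).1 (ends g).2.
  by move=> g gT; apply/negP => H; exact: (cycle_false HTst gT H).
have [g0 _] : exists g0, g0 \in T :&: F by apply/card_gt0P.
have Hcard : #|Vcc ends T F| = t.
  by rewrite /t -addn1; exact: (ncomp_tree (ends g0).1 Tc Tb F).
have tn : (t <= n)%N by rewrite -Hcard; exact: leq_imset_card.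
have HT'st := HT'.1.
set r := run ends T F (fun _ => 0%N) [::] s.
have Hcount : forall A, A \in Vcc ends T F ->
    (count (fun p : {set {set V}} * E => A \in p.1) r)%:R <= log2 (t%:R : R).
  move=> A AV; apply: log2_nat; rewrite -Hcard.
  have := run_count HT'st (k := fun _ => 0%N) (pre := [::]) (rest := s).
  apply => //.
  - by rewrite /= (perm_uniq Hp) enum_uniq.
  - by move=> f; rewrite /= (perm_mem Hp) mem_enum.
  - move=> A' A'V; rewrite /kmax big1_eq expn0 card_gt0; apply/set0Pn.
    by exists A'; rewrite inE connect0.
set cc := cc_of ends T F.
have step1 : \sum_(p <- r) cost c (pcut ends w (flat p.1) (w p.2)) <=
    \sum_(p <- r) \sum_(f in F) c f * (((cc (ends f).1) \in p.1)%:R + ((cc (ends f).2) \in p.1)%:R).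
  rewrite big_seq [X in _ <= X]big_seq; apply: ler_sum => p pr.
  have [XV Hsub] := cross_F HT' w0 nl Hp Hs pr.
  rewrite /cost big_mkcond [X in _ <= X]big_mkcond /=; apply: ler_sum => f _.
  case: ifP => fpc.
  - rewrite (Hsub f fpc) ler_pMr //.
    have := pcut_one XV fpc; rewrite -/cc.
    case: (cc (ends f).1 \in p.1); case: (cc (ends f).2 \in p.1) => //= _;
      by rewrite -?natrD ler1n.
  - case: ifP => _ //; apply: mulr_ge0; first exact: ltW.
    by apply: addr_ge0; apply: ler0n.
have step2 : \sum_(p <- r) \sum_(f in F) c f * (((cc (ends f).1) \in p.1)%:R + ((cc (ends f).2) \in p.1)%:R)
    <= \sum_(f in F) c f * (2 * log2 (t%:R : R)).
  rewrite exchange_big /=; apply: ler_sum => f _.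
  rewrite -mulr_sumr; apply: ler_wpM2l; first exact: ltW.
  rewrite big_split /= !sum_ind mulr_natl mulr2n.
  by apply: lerD; apply: Hcount; apply: imset_f.
have HB : 0 <= B by apply: sumr_ge0 => f _; exact: ltW.
split.
- apply: le_trans step1 (le_trans step2 _).
  by rewrite -mulr_suml -/(cost c F) -/B (mulrC 2 B) mulrA.
- apply: ler_wpM2l; first by apply: mulr_ge0.
  apply: log2_mono => //.
Qed.
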